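(* Let $(A_0,A_1,A_2)$ be an extendable collection of cap sets in $\mathbb{F}_3^n$, and let $S \subseteq \{0,1,2\}^m$ be a recursively admissible set. Then $\left(S(A_0,A_1,A_2), A_1^m, A_2^m\right)$ is an extendable collection of cap sets in $\mathbb{F}_3^{nm}$.
   Context: A cap set is a set $A \subseteq \mathbb{F}_3^n$ such that the only solutions of $x+y+z=0$ with $x,y,z\in A$ are those with $x=y=z$. Cap sets $A_0,A_1,A_2\subseteq\mathbb{F}_3^n$ form an extendable collection if (1) whenever $x,y\in A_0$ (not necessarily distinct) and $z\in A_1\cup A_2$, $x+y+z\neq 0$; and (2) whenever $x\in A_0$, $y\in A_1$, $z\in A_2$, $x+y+z\neq 0$. A set $S\subseteq\{0,1,2\}^m$ is admissible if (1) for all distinct $s,s'\in S$ there are coordinates $i,j$ with $s_i=0\neq s'_i$ and $s_j\neq 0=s'_j$; and (2) for all distinct $s,s',s''\in S$ there is a coordinate $k$ such that the multiset $\{s_k,s'_k,s''_k\}$ equals $\{0,1,2\}$, $\{0,0,1\}$ or $\{0,0,2\}$. $S$ is recursively admissible if it is admissible, $|S|\ge 2$, and for every pair of distinct $s,s'\in S$ at least one of the following holds: (i) there are coordinates $i,j$ with $\{s_i,s'_i\}=\{0,1\}$ and $\{s_j,s'_j\}=\{0,2\}$; (ii) there is a coordinate $k$ with $s_k=s'_k=0$. For $s=(s_1,\dots,s_m)\in\{0,1,2\}^m$ put $s(A_0,A_1,A_2)=A_{s_1}\times\cdots\times A_{s_m}\subseteq\mathbb{F}_3^{nm}$ and $S(A_0,A_1,A_2)=\bigcup_{s\in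 S}s(A_0,A_1,A_2)$. $A_i^m$ denotes the $m$-fold direct product $A_i\times\cdots\times A_i\subseteq \mathbb{F}_3^{nm}$. *)

(* Defs.v *)
From HB Require Import structures.
From mathcomp Require Import all_boot all_order all_algebra.
Set Implicit Arguments. Unset Strict Implicit. Unset Printing Implicit Defensive.
Import GRing.Theory.
Local Open Scope ring_scope.

(* F_3^{nm} is modelled by m x n matrices 'M['F_3]_(m,n): the i-th block
   (of n coordinates) of a vector of F_3^{nm} is the i-th row.
   Addition is entrywise, so this is an isomorphism of F_3-vector spaces. *)

Definition cap_set (V : finZmodType) (A : {set V}) : Prop :=
  forall x y z, x \in A -> y \in A -> z \in A -> x + y + z = 0 ->
    x = y /\ y = z.

Definition extendable (V : finZmodType) (A0 A1 A2 : {set V}) : Prop :=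
  [/\ cap_set A0, cap_set A1, cap_set A2,
      (forall x y z, x \in A0 -> y \in A0 -> (z \in A1) || (z \in A2) ->
         x + y + z != 0) &
      (forall x y z, x \in A0 -> y \in A1 -> z \in A2 -> x + y + z != 0)].

Definition word (m : nat) := {ffun 'I_m -> 'I_3}.

Definition admissible (m : nat) (S : {set word m}) : Prop :=
  (forall s s', s \in S -> s' \in S -> s != s' ->
     exists i j, [/\ (s i : nat) = 0%N, (s' i : nat) <> 0%N,
                     (s j : nat) <> 0%N & (s' j : nat) = 0%N]) /\
  (forall s s' s'', s \in S -> s' \in S -> s'' \in S ->
     s != s' -> s != s'' -> s' != s'' ->
     exists k, let t := [:: (s k : nat); (s' k : nat); (s'' k : nat)] in
       [|| perm_eq t [:: 0; 1; 2]%N, perm_eq t [:: 0; 0; 1]%N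
         | perm_eq t [:: 0; 0; 2]%N]).

Definition recursively_admissible (m : nat) (S : {set word m}) : Prop :=
  [/\ admissible S, (2 <= #|S|)%N &
      forall s s', s \in S -> s' \in S -> s != s' ->
        (exists i j, perm_eq [:: (s i : nat); (s' i : nat)] [:: 0; 1]%N /\
                     perm_eq [:: (s j : nat); (s' j : nat)] [:: 0; 2]%N)
        \/ (exists k, (s k : nat) = 0%N /\ (s' k : nat) = 0%N)].

Definition sel (T : Type) (A0 A1 A2 : T) (j : 'I_3) : T :=
  match nat_of_ord j with 0 => A0 | 1 => A1 | _ => A2 end.

Definition prodset (n m : nat) (f : 'I_m -> {set 'rV['F_3]_n})
  : {set 'M['F_3]_(m, n)} :=
  [set x | [forall i, row i x \in f i]].

Definition word_set (n m : nat) (A0 A1 A2 : {set 'rV['F_3]_n}) (s : word m) :=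
  prodset (fun i => sel A0 A1 A2 (s i)).

Definition words_set (n m : nat) (A0 A1 A2 : {set 'rV['F_3]_n})
  (S : {set word m}) : {set 'M['F_3]_(m, n)} :=
  \bigcup_(s in S) word_set A0 A1 A2 s.

Definition powset (n m : nat) (A : {set 'rV['F_3]_n}) : {set 'M['F_3]_(m, n)} :=
  prodset (fun _ => A).

(* Main.v *)
Require Import Defs.
From mathcomp Require Import all_boot all_order all_algebra.
Import GRing.Theory.
Local Open Scope ring_scope.
Set Implicit Arguments. Unset Strict Implicit.

Definition forb (a b c : nat) : bool :=
  let t := [:: a; b; c] in
  [|| perm_eq t [:: 0; 1; 2]%N, perm_eq t [:: 0; 0; 1]%N
    | perm_eq t [:: 0; 0; 2]%N].

Ltac kill C := match goal with
  H1 : is_true (?x \in _), H2 : is_true (?y \in _), H3 : is_true (?z \in _),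
  E : ?x + ?y + ?z = 0 |- _ => exact: (C _ _ _ H1 H2 H3 E) end.

Section Key.
Variables (n : nat) (A0 A1 A2 : {set 'rV['F_3]_n}).
Hypothesis ext : extendable A0 A1 A2.

Lemma C1 x y z : x \in A0 -> y \in A0 -> z \in A1 -> x + y + z = 0 -> False.
Proof.
case: ext => _ _ _ e _ hx hy hz E.
by move: (e x y z hx hy); rewrite hz E eqxx => /(_ isT).
Qed.
Lemma C1' x y z : x \in A0 -> y \in A0 -> z \in A2 -> x + y + z = 0 -> False.
Proof.
case: ext => _ _ _ e _ hx hy hz E.
by move: (e x y z hx hy); rewrite hz orbT E eqxx => /(_ isT).
Qed.
Lemma C2 x y z : x \in A0 -> y \in A1 -> z \in A2 -> x + y + z = 0 -> False.
Proof.
case: ext => _ _ _ _ e hx hy hz E.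
by move: (e x y z hx hy hz); rewrite E eqxx.
Qed.

Lemma key (t1 t2 t3 : 'I_3) a b c :
  a \in sel A0 A1 A2 t1 -> b \in sel A0 A1 A2 t2 -> c \in sel A0 A1 A2 t3 ->
  a + b + c = 0 -> ~~ forb t1 t2 t3.
Proof.
move=> Ha Hb Hc E.
have E2 : b + a + c = 0 by rewrite (addrC b).
have E3 : a + c + b = 0 by rewrite addrAC.
have E4 : c + b + a = 0 by rewrite [LHS]addrC [c + b]addrC addrA.
have E5 : b + c + a = 0 by rewrite [LHS]addrC addrA.
have E6 : c + a + b = 0 by rewrite [LHS]addrC addrA addrAC.
move: Ha Hb Hc.
case: t1 => [[|[|[|?]]] ?] //; case: t2 => [[|[|[|?]]] ?] //;
case: t3 => [[|[|[|?]]] ?] //; rewrite /sel /= => Ha Hb Hc //;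
exfalso; first [kill C1 | kill C1' | kill C2].
Qed.

Lemma same (t : 'I_3) a b c :
  a \in sel A0 A1 A2 t -> b \in sel A0 A1 A2 t -> c \in sel A0 A1 A2 t ->
  a + b + c = 0 -> a = b /\ b = c.
Proof.
case: ext => h0 h1 h2 _ _.
by case: t => [[|[|[|?]]] ?] //; rewrite /sel /= => Ha Hb Hc E;
  [apply: h0 | apply: h1 | apply: h2].
Qed.

End Key.

Lemma row_sum (n m : nat) (k : 'I_m) (x y z : 'M['F_3]_(m, n)) :
  x + y + z = 0 -> row k x + row k y + row k z = 0.
Proof. by move=> E; rewrite -!linearD /= E linear0. Qed.

Lemma forb_perm a b c d :
  perm_eq [:: a; b] [:: 0; c]%N -> forb a b d = forb 0 c d.
Proof.
move=> H; have H3 : perm_eq [:: a; b; d] [:: 0%N; c; d].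
  by rewrite -(perm_cat2r [:: d]) in H.
by rewrite /forb !(permPl H3).
Qed.

Definition wc (m : nat) (j : 'I_3) : word m := [ffun _ => j].
Definition o1 : 'I_3 := @Ordinal 3 1 isT.
Definition o2 : 'I_3 := @Ordinal 3 2 isT.

Section Main.
Variables (n m : nat) (A0 A1 A2 : {set 'rV['F_3]_n}).
Hypothesis ext : extendable A0 A1 A2.

Lemma wkey (s1 s2 s3 : word m) x y z :
  x \in word_set A0 A1 A2 s1 -> y \in word_set A0 A1 A2 s2 ->
  z \in word_set A0 A1 A2 s3 -> x + y + z = 0 ->
  forall k, ~~ forb (s1 k) (s2 k) (s3 k).
Proof.
rewrite !inE => /forallP hx /forallP hy /forallP hz E k.
exact: (key ext (hx k) (hy k) (hz k) (row_sum k E)).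
Qed.

Lemma wsame (s : word m) x y z :
  x \in word_set A0 A1 A2 s -> y \in word_set A0 A1 A2 s ->
  z \in word_set A0 A1 A2 s -> x + y + z = 0 -> x = y /\ y = z.
Proof.
rewrite !inE => /forallP hx /forallP hy /forallP hz E.
split; apply/row_matrixP => k;
  have [] := same ext (hx k) (hy k) (hz k) (row_sum k E) => //.
Qed.

Lemma pow_word (j : 'I_3) x :
  x \in powset m (sel A0 A1 A2 j) -> x \in word_set A0 A1 A2 (wc m j).
Proof. by rewrite !inE => /forallP h; apply/forallP => i; rewrite ffunE. Qed.

End Main.

Lemma pow_cap (n m : nat) (A : {set 'rV['F_3]_n}) :
  cap_set A -> cap_set (powset m A).
Proof.
move=> hA x y z; rewrite !inE => /forallP hx /forallP hy /forallP hz E.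
split; apply/row_matrixP => k;
  have [] := hA _ _ _ (hx k) (hy k) (hz k) (row_sum k E) => //.
Qed.

Theorem lemma2p9 (n m : nat) (A0 A1 A2 : {set 'rV['F_3]_n}) (S : {set word m}) :
  extendable A0 A1 A2 ->
  recursively_admissible S ->
  extendable (words_set A0 A1 A2 S) (powset m A1) (powset m A2).
Proof.
move=> ext [[ad1 ad2] hS rec].
have ext' := ext; case: ext' => h0 h1 h2 _ _.
have zero : forall s, s \in S -> exists i, (s i : nat) = 0%N.
  move=> s sS.
  case: (pickP [pred s' in S | s' != s]) => [s' /andP [s'S ns] | H].
    have [i [j [? _ _ _]]] := ad1 s s' sS s'S (ltac:(by rewrite eq_sym)).
    by exists i.
  have : S \subset [set s].
    apply/subsetP => t tS; rewrite inE; apply/negPn/negP => nt.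
    by move: (H t); rewrite /= tS nt.
  by move/subset_leq_card; rewrite cards1 => h; move: (leq_trans hS h).
have P1 : powset m A1 = powset m (sel A0 A1 A2 o1) by [].
have P2 : powset m A2 = powset m (sel A0 A1 A2 o2) by [].
split.
- move=> x y z /bigcupP [s sS xs] /bigcupP [s' s'S ys] /bigcupP [s'' s''S zs] E.
  have K := wkey ext xs ys zs E.
  have [e1|n1] := eqVneq s s'; have [e2|n2] := eqVneq s' s''.
  + by subst; apply: (wsame ext xs ys zs E).
  + subst s'; have [i [_ [hi hi' _ _]]] := ad1 _ _ s'S s''S n2.
    move: (K i); rewrite hi; move: hi' (ltn_ord (s'' i)).
    by case: (nat_of_ord (s'' i)) => [|[|[|?]]].
  + subst s''; have [i [_ [hi hi' _ _]]] := ad1 _ _ s'S sS (ltac:(by rewrite eq_sym)).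
    move: (K i); rewrite hi; move: hi' (ltn_ord (s i)).
    by case: (nat_of_ord (s i)) => [|[|[|?]]].
  + have [e3|n3] := eqVneq s s''.
      subst s''; have [i [_ [hi hi' _ _]]] := ad1 _ _ sS s'S n1.
      move: (K i); rewrite hi; move: hi' (ltn_ord (s' i)).
      by case: (nat_of_ord (s' i)) => [|[|[|?]]].
    have [k hk] := ad2 _ _ _ sS s'S s''S n1 n3 n2.
    by move: (K k); rewrite /forb hk.
- exact: pow_cap.
- exact: pow_cap.
- move=> x y z /bigcupP [s sS xs] /bigcupP [s' s'S ys] hz; apply/eqP => E.
  have [w [hw zw]] : exists w : 'I_3, ((w : nat) = 1%N \/ (w : nat) = 2%N) /\
      z \in word_set A0 A1 A2 (wc m w).
    case/orP: hz => hz.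
      by exists o1; split; [auto | exact: (@pow_word _ _ A0 A1 A2 o1 z hz)].
    by exists o2; split; [auto | exact: (@pow_word _ _ A0 A1 A2 o2 z hz)].
  have K := wkey ext xs ys zw E.
  have [e1|n1] := eqVneq s s'.
    subst s'; have [i hi] := zero _ sS.
    by move: (K i); rewrite ffunE hi; case: hw => ->.
  case: (rec _ _ sS s'S n1) => [[i [j [hi hj]]] | [k [hk hk']]].
    case: hw => hw.
      by move: (K j); rewrite ffunE hw (forb_perm _ hj).
    by move: (K i); rewrite ffunE hw (forb_perm _ hi).
  by move: (K k); rewrite ffunE hk hk'; case: hw => ->.
- move=> x y z /bigcupP [s sS xs] hy hz; apply/eqP => E.
  have K := wkey ext xs (@pow_word _ _ A0 A1 A2 o1 y hy) (@pow_word _ _ A0 A1 A2 o2 z hz) E.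
  have [i hi] := zero _ sS.
  by move: (K i); rewrite !ffunE hi.
Qed.
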